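(* Let $\mathcal{D}_R$ be the class of all finite reflexive digraphs and let $D\in\mathcal{D}_R$. The class $\mathrm{Av}(D)=\{E\in\mathcal{D}_R: D\not\preceq E\}$, with respect to the strong homomorphic image ordering $\preceq$, is well quasi-ordered if and only if $D$ is isomorphic to the complete digraph $\overrightarrow{K}_n$ for some $n\ge1$.
   Context: A digraph is a set $D$ with a binary relation $E(D)\subseteq D\times D$; reflexive means every loop $(x,x)$ is an edge. $\overrightarrow{K}_n$ is the digraph on $\{1,\dots,n\}$ with edge set $\{(i,j):1\le i,j\le n\}$. A homomorphism maps edges to edges; it is strong if additionally every edge of the target between vertices of the image is the image of an edge. Strong homomorphic image ordering: $A\preceq B$ iff there is a surjective strong homomorphism $B\to A$. Well quasi-ordered means no infinite strictly decreasing sequence and no infinite antichain; digraphs considered up to isomorphism. *)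

(* Defs.v *)
From mathcomp Require Import all_boot.
Set Implicit Arguments. Unset Strict Implicit. Unset Printing Implicit Defensive.

Record fdigraph := FDigraph { fd_n : nat; fd_E : rel 'I_fd_n }.
Arguments fd_E : clear implicits.

Definition reflexive_dg (D : fdigraph) : Prop := forall x, fd_E D x x.

Definition Kn (n : nat) : fdigraph := @FDigraph n (fun _ _ => true).

Definition dg_hom (B A : fdigraph) (f : 'I_(fd_n B) -> 'I_(fd_n A)) : Prop :=
  forall x y, fd_E B x y -> fd_E A (f x) (f y).

Definition dg_strong_hom (B A : fdigraph) (f : 'I_(fd_n B) -> 'I_(fd_n A)) : Prop :=
  @dg_hom B A f /\
  forall x y, fd_E A (f x) (f y) ->
    exists x' y', [/\ f x' = f x, f y' = f y & fd_E B x' y'].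

Definition dg_surj (B A : fdigraph) (f : 'I_(fd_n B) -> 'I_(fd_n A)) : Prop :=
  forall a, exists b, f b = a.

Definition shi_le (A B : fdigraph) : Prop :=
  exists f : 'I_(fd_n B) -> 'I_(fd_n A), @dg_strong_hom B A f /\ @dg_surj B A f.

Definition shi_lt (A B : fdigraph) : Prop := shi_le A B /\ ~ shi_le B A.

Definition dg_iso (A B : fdigraph) : Prop :=
  exists f : 'I_(fd_n A) -> 'I_(fd_n B), bijective f /\
    forall x y, fd_E A x y = fd_E B (f x) (f y).

Definition wqo_shi (C : fdigraph -> Prop) : Prop :=
  (~ exists s : nat -> fdigraph,
       (forall i, C (s i)) /\ forall i, shi_lt (s i.+1) (s i)) /\
  (~ exists s : nat -> fdigraph,
       (forall i, C (s i)) /\ forall i j, i <> j -> ~ shi_le (s i) (s j)).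

Definition Av (D : fdigraph) (E : fdigraph) : Prop :=
  reflexive_dg E /\ ~ shi_le D E.

(* Main.v *)
Require Import Defs.
From mathcomp Require Import all_boot.
From Stdlib Require Import Classical ClassicalEpsilon.
Set Implicit Arguments. Unset Strict Implicit. Unset Printing Implicit Defensive.

Lemma surj_card (T T' : finType) (f : T -> T') :
  (forall a, exists b, f b = a) -> #|T'| <= #|T|.
Proof.
move=> hs.
have ex a : exists b, f b == a by case: (hs a) => b <-; exists b.
pose g a := xchoose (ex a).
apply: (@leq_card _ _ g) => a a' e.
by rewrite -(eqP (xchooseP (ex a))) -(eqP (xchooseP (ex a'))) -/(g a) -/(g a') e.
Qed.

Lemma shi_le_card A B : shi_le A B -> fd_n A <= fd_n B.
Proof.
case=> f [_ hs]; have := surj_card hs; by rewrite !card_ord.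
Qed.

Lemma shi_le_trans A B C : shi_le A B -> shi_le B C -> shi_le A C.
Proof.
case=> f [[hf sf] uf] [g [[hg sg] ug]].
exists (fun x => f (g x)); split; [split|].
- by move=> x y e; apply: hf; apply: hg.
- move=> x y /sf [a' [b' [ea eb e]]].
  case: (ug a') => x2 ex2; case: (ug b') => y2 ey2.
  rewrite -ex2 -ey2 in e; case: (sg _ _ e) => x' [y' [ex ey e']].
  by exists x', y'; split => //; rewrite ?ex ?ey ?ex2 ?ey2.
- move=> a; case: (uf a) => b <-; case: (ug b) => c <-; by exists c.
Qed.

Lemma shi_le_sym_eq A B : shi_le A B -> fd_n A = fd_n B -> shi_le B A.
Proof.
case=> f [[hf sf] uf] eAB.
have ex a : exists b, f b == a by case: (uf a) => b <-; exists b.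
pose g a := xchoose (ex a).
have fg a : f (g a) = a by apply/eqP/(xchooseP (ex a)).
have ginj : injective g by move=> a a' e; rewrite -(fg a) -(fg a') e.
have [h gh hg] : bijective g.
  by apply: inj_card_bij => //; rewrite !card_ord eAB.
have finj : injective f.
  move=> x y e; rewrite -(hg x) -(hg y) in e *.
  by rewrite !fg in e; rewrite e.
exists g; split; [split|].
- move=> a a' e; rewrite -(fg a) -(fg a') in e.
  case: (sf _ _ e) => x' [y' [ex1 ey1 e']].
  by rewrite -(finj _ _ ex1) -(finj _ _ ey1).
- move=> x y e; exists x, y; split => //.
  by rewrite -(fg x) -(fg y); apply: hf.
- by move=> b; exists (f b); apply: finj; rewrite fg.
Qed.

Lemma no_desc (C : fdigraph -> Prop) :
  ~ exists s : nat -> fdigraph, (forall i, C (s i)) /\ forall i, shi_lt (s i.+1) (s i).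
Proof.
case=> s [_ hs].
have dec i : fd_n (s i.+1) < fd_n (s i).
  case: (hs i) => h1 h2; rewrite ltn_neqAle shi_le_card // andbT.
  apply/negP => /eqP e; apply: h2; exact: shi_le_sym_eq.
have : forall i, fd_n (s i) + i <= fd_n (s 0).
  elim=> [|i IH]; first by rewrite addn0.
  by apply: leq_trans IH; rewrite addnS ltn_add2r dec.
move=> /(_ (fd_n (s 0)).+1); by rewrite addnS ltnNge leq_addl.
Qed.

Definition Fam (b : bool) (m : nat) : fdigraph :=
  @FDigraph (m.*2) (fun u v => (u == v) || (u./2 != v./2) || (~~ b && odd u)).

Lemma Fam_refl b m : reflexive_dg (Fam b m).
Proof. by move=> x /=; rewrite eqxx. Qed.

Lemma half_odd_inj (u v : nat) : u./2 = v./2 -> odd u = odd v -> u = v.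
Proof.
move=> h o; by rewrite -(odd_double_half u) -(odd_double_half v) h o.
Qed.

Lemma Fam_ne b m (u v : 'I_(m.*2)) : ~~ fd_E (Fam b m) u v ->
  [/\ u./2 = v./2, odd u = ~~ odd v & (b || ~~ odd u)].
Proof.
rewrite /= !negb_or negbK => /andP [/andP [neq /eqP h] hb].
split => //; last by move: hb; case: b; case: (odd u).
move: neq (half_odd_inj h); rewrite -val_eqE /=.
by case: (odd u); case: (odd v) => //= /negP neq H; exfalso; apply: neq; rewrite H.
Qed.

Lemma Fam_uniq1 b m (u u' v : 'I_(m.*2)) :
  ~~ fd_E (Fam b m) u v -> ~~ fd_E (Fam b m) u' v -> u' = u.
Proof.
move=> /Fam_ne [h1 o1 _] /Fam_ne [h2 o2 _]; apply: val_inj => /=.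
by apply: half_odd_inj; rewrite ?h1 ?h2 ?o1 ?o2.
Qed.

Lemma Fam_uniq2 b m (u v v' : 'I_(m.*2)) :
  ~~ fd_E (Fam b m) u v -> ~~ fd_E (Fam b m) u v' -> v' = v.
Proof.
move=> /Fam_ne [h1 o1 _] /Fam_ne [h2 o2 _]; apply: val_inj => /=.
apply: half_odd_inj; first by rewrite -h1 -h2.
by apply: (@inv_inj _ negb); first exact: negbK; rewrite -o1 -o2.
Qed.

Lemma Fam_sym_ne b m (u v : 'I_(m.*2)) :
  ~~ fd_E (Fam b m) u v -> ~~ fd_E (Fam b m) v u -> b.
Proof.
move=> /Fam_ne [_ o1 h1] /Fam_ne [_ o2 h2].
by case: b h1 h2 => //=; move: o1; case: (odd u); case: (odd v).
Qed.

Lemma Fam_symm (b : bool) m (u v : 'I_(m.*2)) : b -> fd_E (Fam b m) u v = fd_E (Fam b m) v u.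
Proof. by move=> ->; rewrite /= !orbF [u == v]eq_sym [v./2 == _]eq_sym. Qed.

Lemma Fam_partner b m (v : 'I_(m.*2)) :
  exists u, ~~ fd_E (Fam b m) u v \/ ~~ fd_E (Fam b m) v u.
Proof.
have hv : val v = odd v + (v./2).*2 by rewrite odd_double_half.
move: hv; set h := v./2 => hv.
have e1 : (h.*2.+1)./2 = h by rewrite -[_.+1./2]/(uphalf _) uphalf_double.
case ov: (odd v); rewrite ov /= in hv.
- have lt : h.*2 < m.*2 by apply: leq_ltn_trans (ltn_ord v); rewrite hv add1n.
  exists (Ordinal lt); left => /=.
  rewrite odd_double andbF orbF negb_or -val_eqE /= /h hv add1n.
  by rewrite doubleK e1 eqxx (ltn_eqF (ltnSn _)).
- have lt : h.*2.+1 < m.*2.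
    have := ltn_ord v; rewrite hv add0n ltn_double => h1.
    by rewrite -doubleS leq_double.
  exists (Ordinal lt); right => /=.
  rewrite ov andbF orbF negb_or -val_eqE /= /h hv add0n.
  by rewrite doubleK uphalf_double eqxx (ltn_eqF (ltnSn _)).
Qed.

Lemma fam_pre b m G (f : 'I_(fd_n (Fam b m)) -> 'I_(fd_n G)) (hf : dg_hom f) u v :
  ~~ fd_E G (f u) (f v) ->
  [/\ ~~ fd_E (Fam b m) u v, (forall u', f u' = f u -> u' = u)
    & (forall v', f v' = f v -> v' = v)].
Proof.
have ne x y : ~~ fd_E G (f x) (f y) -> ~~ fd_E (Fam b m) x y.
  by move=> h; apply/negP => /hf; apply/negP.
move=> h; split; first exact: ne.
- move=> u' e; apply: (Fam_uniq1 (ne _ _ h)); apply: ne; by rewrite e.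
- move=> v' e; apply: (Fam_uniq2 (ne _ _ h)); apply: ne; by rewrite e.
Qed.

Lemma fam_anti b i j : i != j -> ~ shi_le (Fam b i.+1) (Fam b j.+1).
Proof.
move=> nij hle; case: (ltngtP i j) => hij.
- case: hle => f [[hf sf] uf].
  have finj : injective f.
    move=> x x' e.
    case: (Fam_partner b (f x)) => u hu; case: (uf u) => z ez.
    case: hu => hu; rewrite -ez in hu.
    + by case: (fam_pre hf hu) => _ _ /(_ _ (esym e)).
    + by case: (fam_pre hf hu) => _ /(_ _ (esym e)).
  have := @inj_leq _ _ f finj; rewrite leq_double ltnS leqNgt => /negP; apply.
  by [].
- have := shi_le_card hle; rewrite /= leq_double ltnS leqNgt => /negP; apply.
  by [].
- by rewrite hij eqxx in nij.
Qed.

Lemma fam_notle D b m : reflexive_dg D ->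
  ~ (exists n, 1 <= n /\ dg_iso D (Kn n)) ->
  b = [exists a, exists c, ~~ fd_E D a c && fd_E D c a] -> 0 < m ->
  ~ shi_le D (Fam b m).
Proof.
move=> hD hK hb hm [f [[hf sf] uf]].
case: (boolP [forall a, forall c, fd_E D a c]) => hall.
- apply: hK; exists (fd_n D); split.
    have x0 : 'I_(fd_n (Fam b m)) by exists 0; rewrite /= double_gt0.
    exact: leq_ltn_trans (leq0n _) (ltn_ord (f x0)).
  exists id; split; first by exists id.
  by move=> x y; move/forallP: hall => /(_ x) /forallP /(_ y) ->.
- move/forallPn: hall => [a /forallPn [c hac]].
  case: (uf a) => x ex; case: (uf c) => y ey.
  case: (boolP b) => hbt; [rewrite hbt in hb | rewrite (negbTE hbt) in hb].
  + move/esym/existsP: hb => [a' /existsP [c' /andP [h1 h2]]].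
    case: (uf a') => x' ex'; case: (uf c') => y' ey'.
    rewrite -ex' -ey' in h1 h2.
    case: (fam_pre hf h1) => ne u1 u2.
    case: (sf _ _ h2) => y2 [x2 [ey2 ex2 e2]].
    rewrite (u2 _ ey2) (u1 _ ex2) (Fam_symm _ _ hbt) in e2.
    by rewrite e2 in ne.
  + have hca : ~~ fd_E D c a.
      move/esym/negbT: hb; rewrite negb_exists => /forallP /(_ a).
      rewrite negb_exists => /forallP /(_ c); rewrite negb_and negbK.
      by rewrite (negbTE hac).
    rewrite -ex -ey in hac hca.
    case: (fam_pre hf hac) => n1 _ _; case: (fam_pre hf hca) => n2 _ _.
    by have := Fam_sym_ne n1 n2; rewrite (negbTE hbt).
Qed.

Definition incr (t : nat -> nat) := forall i, t i < t i.+1.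

Lemma incr_le t : incr t -> forall i j, i <= j -> t i <= t j.
Proof.
move=> h i j /subnKC <-; elim: (j - i) => [|k IH]; first by rewrite addn0.
by rewrite addnS; apply: leq_trans IH (ltnW (h _)).
Qed.

Lemma incr_lt t : incr t -> forall i j, i < j -> t i < t j.
Proof. by move=> h i j hij; apply: leq_trans (h i) (incr_le h hij). Qed.

Lemma mono_step (a : nat -> nat) : (forall i, a i <= a i.+1) ->
  forall i j, i <= j -> a i <= a j.
Proof.
move=> h i j /subnKC <-; elim: (j - i) => [|k IH]; first by rewrite addn0.
by rewrite addnS; apply: leq_trans IH (h _).
Qed.

Lemma sub_const (F : finType) (p : nat -> F) :
  exists t, incr t /\ forall i, p (t i) = p (t 0).
Proof.
have [v hv] : exists v, forall k, exists i, (k <= i) && (p i == v).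
  apply: NNPP => H.
  have H1 : forall v, exists k, forall i, k <= i -> p i != v.
    move=> v; apply: NNPP => H2; apply: H; exists v => k.
    apply: NNPP => H3; apply: H2; exists k => i hi; apply/negP => /eqP e.
    by apply: H3; exists i; rewrite hi e eqxx.
  have H4 : forall l : seq F, exists K, forall w, w \in l -> forall i, K <= i -> p i != w.
    elim=> [|w l [K hK]]; first by exists 0.
    case: (H1 w) => K' hK'; exists (maxn K K') => w'; rewrite inE => /orP [/eqP -> | hw] i hi.
      by apply: hK'; apply: leq_trans hi; apply: leq_maxr.
    by apply: hK => //; apply: leq_trans hi; apply: leq_maxl.
  case: (H4 (enum F)) => K /(_ (p K)); rewrite mem_enum => /(_ isT K (leqnn K)).
  by rewrite eqxx.
pose next k := ex_minn (hv k).
have hnext k : k <= next k /\ p (next k) = v.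
  rewrite /next; case: ex_minnP => i /andP [h1 /eqP h2] _; by [].
pose t n := iter n (fun x => next x.+1) (next 0).
exists t; split.
- move=> i; rewrite /t iterS; exact: (hnext _).1.
- have ht i : p (t i) = v by case: i => [|i]; rewrite /t ?iterS; apply: (hnext _).2.
  by move=> i; rewrite !ht.
Qed.

Lemma minimizer (a : nat -> nat) N :
  exists j, N <= j /\ forall j', N <= j' -> a j <= a j'.
Proof.
have : forall v j, N <= j -> a j <= v -> exists j, N <= j /\ forall j', N <= j' -> a j <= a j'.
  elim=> [|v IH] j hj hv.
    by exists j; split => // j' _; move: hv; rewrite leqn0 => /eqP ->.
  case: (classic (exists j', N <= j' /\ a j' < a j)) => [[j' [h1 h2]]|H].
    by apply: (IH j') => //; rewrite -ltnS; apply: leq_trans h2 hv.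
  exists j; split => // j' hj'; rewrite leqNgt; apply/negP => h; apply: H.
  by exists j'.
by move=> /(_ (a N) N (leqnn N) (leqnn _)).
Qed.

Lemma sub_mono (a : nat -> nat) :
  exists t, incr t /\ forall i, a (t i) <= a (t i.+1).
Proof.
pose mn N := proj1_sig (constructive_indefinite_description _ (minimizer a N)).
have hmn N : N <= mn N /\ forall j', N <= j' -> a (mn N) <= a j'.
  exact: (proj2_sig (constructive_indefinite_description _ (minimizer a N))).
pose t n := iter n (fun x => mn x.+1) (mn 0).
have ti : incr t by move=> i; rewrite /t iterS; exact: (hmn _).1.
exists t; split => // i.
have [N [eN hN]] : exists N, t i = mn N /\ N <= t i.
  case: i => [|i]; first by exists 0.
  exists (t i).+1; split; first by rewrite /t iterS.
  exact: ti.
rewrite eN; apply: (hmn N).2; apply: leq_trans hN _; apply: ltnW; exact: ti.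
Qed.

Lemma dickson (F K : finType) (p : nat -> F) (s : nat -> K -> nat) :
  exists i j, i < j /\ p i = p j /\ forall k, s i k <= s j k.
Proof.
case: (sub_const p) => t0 [i0 c0].
have main : forall l : seq K, exists u, incr u /\ (forall i, exists k, u i = t0 k) /\
    forall k, k \in l -> forall i, s (u i) k <= s (u i.+1) k.
  elim=> [|k l [u [iu [ru mu]]]].
    by exists t0; split => //; split => // i; exists i.
  case: (sub_mono (fun j => s (u j) k)) => t [it mt].
  exists (fun j => u (t j)); split; first by move=> j; apply: incr_lt.
  split; first by move=> j; case: (ru (t j)) => k' ->; exists k'.
  move=> k'; rewrite inE => /orP [/eqP -> // | hk'] i.
  apply: (mono_step (a := fun j => s (u j) k')) => //; last exact: ltnW (it i).
  by move=> j; apply: mu.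
case: (main (enum K)) => u [iu [ru mu]].
exists (u 0), (u 1); split; first exact: iu.
split.
  case: (ru 0) => k1 ->; case: (ru 1) => k2 ->; by rewrite c0 (c0 k2).
by move=> k; apply: mu; rewrite mem_enum.
Qed.

Lemma ord_absurd n (x : 'I_n) : n = 0 -> False.
Proof. by case: x => m hm e; rewrite e in hm. Qed.


Definition twin (K : finType) (E : fdigraph) (l : 'I_(fd_n E) -> K) :=
  forall a a' b b', l a = l a' -> l b = l b' -> l a != l b ->
    fd_E E a b = fd_E E a' b'.
Definition indep (K : finType) (E : fdigraph) (l : 'I_(fd_n E) -> K) :=
  forall a b, l a = l b -> a != b -> ~~ fd_E E a b.
Definition Rset (K : finType) (E : fdigraph) (l : 'I_(fd_n E) -> K) : {set K * K} :=
  [set ab | [exists x, exists y, [&& l x == ab.1, l y == ab.2 & fd_E E x y]]].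
Definition supp (K : finType) (E : fdigraph) (l : 'I_(fd_n E) -> K) : {set K} :=
  [set l x | x : 'I_(fd_n E)].
Definition cls (K : finType) (E : fdigraph) (l : 'I_(fd_n E) -> K) (k : K) :=
  [seq x <- enum 'I_(fd_n E) | l x == k].
Definition sz (K : finType) (E : fdigraph) (l : 'I_(fd_n E) -> K) k := size (cls l k).

Lemma mem_cls (K : finType) E (l : 'I_(fd_n E) -> K) k x : (x \in cls l k) = (l x == k).
Proof. by rewrite mem_filter mem_enum andbT. Qed.

Lemma uniq_cls (K : finType) E (l : 'I_(fd_n E) -> K) k : uniq (cls l k).
Proof. by rewrite filter_uniq // enum_uniq. Qed.

Lemma Rset_P (K : finType) E (l : 'I_(fd_n E) -> K) x y : fd_E E x y -> (l x, l y) \in Rset l.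
Proof. move=> e; rewrite inE; apply/existsP; exists x; apply/existsP; exists y; by rewrite !eqxx e. Qed.

Lemma Rset_E (K : finType) E (l : 'I_(fd_n E) -> K) ab : ab \in Rset l ->
  exists x y, [/\ l x = ab.1, l y = ab.2 & fd_E E x y].
Proof.
rewrite inE => /existsP [x /existsP [y /and3P [/eqP h1 /eqP h2 h3]]]; by exists x, y.
Qed.

Lemma profile_le (K : finType) A B (lA : 'I_(fd_n A) -> K) (lB : 'I_(fd_n B) -> K) :
  reflexive_dg A -> reflexive_dg B -> twin lA -> indep lA -> twin lB -> indep lB ->
  Rset lA = Rset lB -> supp lA = supp lB -> (forall k, sz lA k <= sz lB k) ->
  shi_le A B.
Proof.
move=> rA rB tA iA tB iB eR eS hsz.
have suppB x : exists y, lA y = lB x.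
  have : lB x \in supp lB by apply: imset_f.
  by rewrite -eS => /imsetP [y _ ->]; exists y.
case: (posnP (fd_n A)) => hA.
  have hB : forall x : 'I_(fd_n B), False.
    by move=> x; case: (suppB x) => y _; apply: (ord_absurd y).
  have f : 'I_(fd_n B) -> 'I_(fd_n A) by move=> x; case: (hB x).
  exists f; split; [split|] => x; try by case: (hB x).
  exfalso; exact: (ord_absurd x).
pose d := Ordinal hA.
pose g x := nth d (cls lA (lB x)) (minn (index x (cls lB (lB x))) (sz lA (lB x)).-1).
have szpos x : 0 < sz lA (lB x).
  case: (suppB x) => y <-; rewrite /sz -has_predT; apply/hasP; exists y => //.
  by rewrite mem_cls.
have gl x : lA (g x) = lB x.
  apply/eqP; rewrite -mem_cls; apply: mem_nth.
  rewrite -/(sz lA (lB x)); apply: leq_ltn_trans (geq_minr _ _) _.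
  by rewrite prednK // szpos.
have ghom : dg_hom g.
  move=> x y e; case: (eqVneq x y) => [-> | nxy]; first exact: rA.
  case: (eqVneq (lB x) (lB y)) => hl.
    by move: (iB _ _ hl nxy); rewrite e.
  have := Rset_P lB e; rewrite -eR => /Rset_E [x' [y' [h1 h2 h3]]].
  move: h1 h2 => /= h1 h2.
  rewrite (tA _ _ _ _ (etrans (gl x) (esym h1)) (etrans (gl y) (esym h2))) //.
  by rewrite !gl.
exists g; split; [split|] => //.
- move=> x y e; case: (eqVneq (g x) (g y)) => hg.
    by exists x, x; split => //; apply: rB.
  case: (eqVneq (lB x) (lB y)) => hl.
    by move: (iA _ _ (etrans (gl x) (etrans hl (esym (gl y)))) hg); rewrite e.
  have := Rset_P lA e; rewrite eR => /Rset_E [x' [y' [h1 h2 h3]]].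
  move: h1 h2 => /= h1 h2.
  exists x, y; split => //.
  rewrite (tB _ _ _ _ (etrans (esym (gl x)) (esym h1)) (etrans (esym (gl y)) (esym h2))) //.
- move=> y; set k := lA y.
  have [z hz] : exists z, lB z = k.
    have : k \in supp lA by apply: imset_f.
    by rewrite eS => /imsetP [z _ ->]; exists z.
  set r := index y (cls lA k).
  have yin : y \in cls lA k by rewrite mem_cls.
  have rlt : r < sz lA k by rewrite /r /sz index_mem.
  have rltB : r < sz lB k by apply: leq_trans rlt (hsz k).
  exists (nth z (cls lB k) r).
  have xin : nth z (cls lB k) r \in cls lB k by apply: mem_nth.
  have lx : lB (nth z (cls lB k) r) = k by apply/eqP; rewrite -mem_cls.
  rewrite /g lx index_uniq ?uniq_cls //.
  have -> : minn r (sz lA k).-1 = r.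
    by apply/minn_idPl; rewrite -ltnS prednK // (leq_ltn_trans (leq0n _) rlt).
  by rewrite (set_nth_default y) // nth_index.
Qed.


Definition Pset n : {set 'I_n * 'I_n} := [set p | p.1 != p.2].
Definition cc n := (n * n).*2.


Definition matching (E : fdigraph) (S : {set 'I_(fd_n E) * 'I_(fd_n E)}) :=
  [forall e in S, (e.1 != e.2) && fd_E E e.1 e.2] &&
  [forall e in S, forall e' in S, (e != e') ==>
     [&& e.1 != e'.1, e.1 != e'.2, e.2 != e'.1 & e.2 != e'.2]].

Lemma match_arc (E : fdigraph) S e : matching (E:=E) S -> e \in S -> (e.1 != e.2) && fd_E E e.1 e.2.
Proof. by case/andP => /forall_inP h _ /h. Qed.

Lemma match_disj (E : fdigraph) S e e' : matching (E:=E) S -> e \in S -> e' \in S -> e != e' ->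
  [&& e.1 != e'.1, e.1 != e'.2, e.2 != e'.1 & e.2 != e'.2].
Proof.
case/andP => _ /forall_inP h he he' ne.
by move: (h e he) => /forall_inP /(_ e' he') /implyP /(_ ne).
Qed.

Lemma vcover (E : fdigraph) n : 0 < n -> reflexive_dg E -> ~ shi_le (Kn n) E ->
  exists C : {set 'I_(fd_n E)}, #|C| <= cc n /\
    forall x y, x != y -> fd_E E x y -> (x \in C) || (y \in C).
Proof.
move=> hn rE hK.
case: (posnP (fd_n E)) => hN.
  exists set0; rewrite cards0; split => // x; exfalso; exact: (ord_absurd x).
have m0 : matching (E:=E) set0.
  by apply/andP; split; apply/forall_inP => e; rewrite inE.
case: (arg_maxnP (fun S : {set 'I_(fd_n E) * 'I_(fd_n E)} => #|S|) m0) => S mS maxS.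
case: (leqP #|Pset n| #|S|) => hPS.
  exfalso; apply: hK.
  pose x0 : 'I_(fd_n E) := Ordinal hN.
  pose phi p := nth (x0, x0) (enum S) (index p (enum (Pset n))).
  have phiS p : p \in Pset n -> phi p \in S.
    move=> hp; rewrite -mem_enum; apply: mem_nth.
    rewrite -cardE; apply: leq_trans hPS; by rewrite cardE index_mem mem_enum.
  have phiinj p q : p \in Pset n -> q \in Pset n -> phi p = phi q -> p = q.
    move=> hp hq /eqP; rewrite /phi nth_uniq ?enum_uniq //; first last.
    - rewrite -cardE; apply: leq_trans hPS; by rewrite cardE index_mem mem_enum.
    - rewrite -cardE; apply: leq_trans hPS; by rewrite cardE index_mem mem_enum.
    move/eqP => e.
    have h1 : nth p (enum (Pset n)) (index p (enum (Pset n))) = p by rewrite nth_index // mem_enum.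
    have h2 : nth p (enum (Pset n)) (index q (enum (Pset n))) = q by rewrite nth_index // mem_enum.
    by apply: etrans (esym h1) _; rewrite e h2.
  pose i0 : 'I_n := Ordinal hn.
  pose f x := if [pick p in Pset n | x == (phi p).1] is Some p then p.1
              else if [pick p in Pset n | x == (phi p).2] is Some p then p.2 else i0.
  have f1 p : p \in Pset n -> f (phi p).1 = p.1.
    move=> hp; rewrite /f; case: pickP => [q /andP [hq /eqP e] | H].
      case: (eqVneq (phi p) (phi q)) => [/phiinj -> // | ne].
      by move: (match_disj mS (phiS _ hp) (phiS _ hq) ne); rewrite e eqxx.
    by move: (H p); rewrite hp eqxx.
  have f2 p : p \in Pset n -> f (phi p).2 = p.2.
    move=> hp; rewrite /f; case: pickP => [q /andP [hq /eqP e] | _].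
      case: (eqVneq (phi p) (phi q)) => [ee | ne].
        by move: (match_arc mS (phiS _ hp)); rewrite e ee eqxx.
      by move: (match_disj mS (phiS _ hp) (phiS _ hq) ne); rewrite e eqxx !andbF.
    case: pickP => [q /andP [hq /eqP e] | H].
      case: (eqVneq (phi p) (phi q)) => [/phiinj -> // | ne].
      by move: (match_disj mS (phiS _ hp) (phiS _ hq) ne); rewrite e eqxx !andbF.
    by move: (H p); rewrite hp eqxx.
  exists f; split; [split|] => //.
  - move=> x y _; case: (eqVneq (f x) (f y)) => hxy.
      by exists x, x; split => //; apply: rE.
    have hp : (f x, f y) \in Pset n by rewrite inE.
    exists (phi (f x, f y)).1, (phi (f x, f y)).2.
    rewrite f1 // f2 //; split => //.
    by case/andP: (match_arc mS (phiS _ hp)).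
  - move=> i; case: (ltnP 1 n) => hn2.
      have hj : (if val i == 0 then 1 else 0) < n by case: (val i == 0).
      pose j := Ordinal hj.
      have hp : (i, j) \in Pset n.
        rewrite inE /= -val_eqE /=; by case: (val i) => [|k].
      by exists (phi (i, j)).1; rewrite f1.
    exists x0; apply: val_inj.
    have z (k : 'I_n) : val k = 0.
      by apply/eqP; rewrite -leqn0 -ltnS (leq_trans (ltn_ord k) hn2).
    by rewrite !z.
pose C := [set x | [exists e in S, (x == e.1) || (x == e.2)]].
exists C; split.
  have sub : C \subset (fst @: S) :|: (snd @: S).
    apply/subsetP => x; rewrite inE => /exists_inP [e he /orP [/eqP -> | /eqP ->]];
      rewrite inE; apply/orP; [left | right]; by apply: imset_f.
  apply: leq_trans (subset_leq_card sub) _.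
  apply: leq_trans (leq_card_setU _ _).1 _.
  apply: leq_trans (leq_add (leq_imset_card _ _) (leq_imset_card _ _)) _.
  rewrite addnn /cc leq_double; apply: leq_trans (ltnW hPS) _.
  apply: leq_trans (subset_leq_card (subsetT (Pset n))) _.
  by rewrite cardsT card_prod !card_ord.
move=> x y nxy exy; apply/negPn/negP; rewrite negb_or => /andP [hx hy].
have nin : (x, y) \notin S.
  apply/negP => h; move: hx; rewrite inE => /negP; apply.
  by apply/exists_inP; exists (x, y); rewrite ?eqxx.
have mS' : matching (E:=E) ((x, y) |: S).
  apply/andP; split.
    apply/forall_inP => e; rewrite in_setU1 => /orP [/eqP -> /= | he].
      by rewrite nxy exy.
    exact: match_arc mS he.
  have nC z e : z \notin C -> e \in S -> (z != e.1) && (z != e.2).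
    move=> hz he; rewrite inE in hz.
    by apply/andP; split; apply/negP => /eqP h; apply: (negP hz); apply/exists_inP;
      exists e; rewrite // h eqxx ?orbT.
  apply/forall_inP => e; rewrite in_setU1 => /orP [/eqP -> | he];
    apply/forall_inP => e'; rewrite in_setU1 => /orP [/eqP -> | he'];
    apply/implyP => ne.
  - by rewrite eqxx in ne.
  - by case/andP: (nC _ _ hx he') => -> ->; case/andP: (nC _ _ hy he') => -> ->.
  - case/andP: (nC _ _ hx he) => h1 h2; case/andP: (nC _ _ hy he) => h3 h4.
    by rewrite /= eq_sym h1 eq_sym h3 eq_sym h2 eq_sym h4.
  - exact: match_disj mS he he' ne.
by have := maxS _ mS'; rewrite cardsU1 nin /= add1n ltnn.
Qed.


Definition Kt c := (option 'I_c * ({set 'I_c} * {set 'I_c}))%type.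

Lemma structure (E : fdigraph) c (C : {set 'I_(fd_n E)}) : #|C| <= c ->
  (forall x y, x != y -> fd_E E x y -> (x \in C) || (y \in C)) ->
  exists l : 'I_(fd_n E) -> Kt c, twin l /\ indep l.
Proof.
move=> hC hcov.
pose pos x : option 'I_c := if x \in C then insub (index x (enum C)) else None.
have posC x : x \in C -> exists p, pos x = Some p.
  move=> hx; rewrite /pos hx.
  have lt : index x (enum C) < c.
    by apply: leq_trans hC; rewrite cardE index_mem mem_enum.
  by exists (Ordinal lt); rewrite insubT.
have posN x : x \notin C -> pos x = None by rewrite /pos => /negbTE ->.
have posNC x : pos x = None -> x \notin C.
  by move=> h; apply/negP => /posC [p]; rewrite h.
have posinj x y p : pos x = Some p -> pos y = Some p -> x = y.
  rewrite /pos; case hx: (x \in C) => //; case hy: (y \in C) => //.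
  case: insubP => // q _ eq [<-]; case: insubP => // q' _ eq' [eqq].
  have e : index x (enum C) = index y (enum C) by rewrite -eq -eq' eqq.
  have h1 : nth x (enum C) (index x (enum C)) = x by rewrite nth_index // mem_enum.
  have h2 : nth x (enum C) (index y (enum C)) = y by rewrite nth_index // mem_enum.
  by apply: etrans (esym h1) _; rewrite e h2.
pose out x := [set p | [exists z, (pos z == Some p) && fd_E E x z]].
pose inn x := [set p | [exists z, (pos z == Some p) && fd_E E z x]].
pose l x : Kt c := (pos x, (inn x, out x)).
have Lout a b q : pos b = Some q -> fd_E E a b = (q \in out a).
  move=> hb; rewrite inE; apply/idP/existsP => [e | [z /andP [/eqP hz e]]].
    by exists b; rewrite hb eqxx.
  by rewrite -(posinj _ _ _ hz hb).
have Lin a b q : pos a = Some q -> fd_E E a b = (q \in inn b).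
  move=> ha; rewrite inE; apply/idP/existsP => [e | [z /andP [/eqP hz e]]].
    by exists a; rewrite ha eqxx.
  by rewrite -(posinj _ _ _ hz ha).
have nocov a b : pos a = None -> pos b = None -> a != b -> ~~ fd_E E a b.
  move=> ha hb nab; apply/negP => /(hcov _ _ nab).
  by rewrite (negbTE (posNC _ ha)) (negbTE (posNC _ hb)).
have L1 a a' b : l a = l a' -> l a != l b -> fd_E E a b = fd_E E a' b.
  rewrite /l => [[ep ei eo]] nl.
  case ha: (pos a) => [p|] in ep nl *.
    by rewrite (posinj a a' p) // -ep.
  case hb: (pos b) => [q|] in nl *.
    by rewrite (Lout a b q hb) (Lout a' b q hb) eo.
  have nab : a != b by apply: contraNneq nl => ->.
  have nab' : a' != b.
    apply: contraNneq nl => e; by rewrite -e ei eo.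
  by rewrite (negbTE (nocov _ _ ha hb nab)) (negbTE (nocov _ _ (esym ep) hb nab')).
have L2 a b b' : l b = l b' -> l a != l b -> fd_E E a b = fd_E E a b'.
  rewrite /l => [[ep ei eo]] nl.
  case hb: (pos b) => [p|] in ep nl *.
    by rewrite (posinj b b' p) // -ep.
  case ha: (pos a) => [q|] in nl *.
    by rewrite (Lin a b q ha) (Lin a b' q ha) ei.
  have nab : a != b by apply: contraNneq nl => ->.
  have nab' : a != b'.
    apply: contraNneq nl => e; by rewrite e -ei -eo.
  by rewrite (negbTE (nocov _ _ ha hb nab)) (negbTE (nocov _ _ ha (esym ep) nab')).
exists l; split.
- move=> a a' b b' e1 e2 ne.
  rewrite (L1 a a' b e1 ne) (L2 a' b b' e2) //; by rewrite -e1.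
- move=> a b e nab; move: e; rewrite /l => [[ep _ _]].
  case ha: (pos a) => [p|] in ep *.
    by rewrite (posinj a b p) ?eqxx in nab.
  exact: nocov.
Qed.

Lemma iso_le D n : dg_iso D (Kn n) -> shi_le D (Kn n).
Proof.
case=> f [[g fg gf] hE].
exists g; split; [split|].
- by move=> a b _; rewrite hE !gf.
- by move=> a b _; exists a, b.
- by move=> x; exists (f x); rewrite fg.
Qed.

Theorem theorem4p7 (D : fdigraph) (hD : reflexive_dg D) :
  wqo_shi (Av D) <-> exists n, (1 <= n)%N /\ dg_iso D (Kn n).
Proof.
split.
- move=> [_ hw]; apply: NNPP => hK; apply: hw.
  pose b := [exists a, exists c, ~~ fd_E D a c && fd_E D c a].
  exists (fun i => Fam b i.+1); split.
    move=> i; split; first exact: Fam_refl.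
    by apply: fam_notle.
  move=> i j /eqP; exact: fam_anti.
- case=> n [hn hiso]; split; first exact: no_desc.
  case=> s [hs hanti].
  have hK i : ~ shi_le (Kn n) (s i).
    move=> h; case: (hs i) => _; apply; exact: shi_le_trans (iso_le hiso) h.
  have hL i : exists l : 'I_(fd_n (s i)) -> Kt (cc n), twin l /\ indep l.
    case: (@vcover (s i) n hn (hs i).1 (hK i)) => C [hC hcov].
    exact: structure hC hcov.
  pose L i := proj1_sig (constructive_indefinite_description _ (hL i)).
  have hLp i : twin (L i) /\ indep (L i).
    exact: (proj2_sig (constructive_indefinite_description _ (hL i))).
  case: (dickson (fun i => (Rset (L i), supp (L i))) (fun i k => sz (L i) k))
    => i [j [hij [hp hsz]]].
  case: hp => eR eS.
  apply: (hanti i j); first by move=> e; rewrite e ltnn in hij.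
  apply: (profile_le (lA := L i) (lB := L j)) => //.
  + exact: (hs i).1.
  + exact: (hs j).1.
  + exact: (hLp i).1.
  + exact: (hLp i).2.
  + exact: (hLp j).1.
  + exact: (hLp j).2.
Qed.
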